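(* Let $n=2k$ be an even positive integer and $m$ a positive divisor of $n$. Let $u_1,\ldots,u_\tau\in\mathbb{F}_{2^n}$ be pairwise distinct, where $1\le\tau\le k$, and let $F(X_1,\ldots,X_\tau)$ be a reduced polynomial in $\mathbb{F}_2[X_1,\ldots,X_\tau]$. Let $G:\mathbb{F}_{2^n}\to\mathbb{F}_{2^m}$ be a vectorial bent function such that for every $\lambda\in\mathbb{F}_{2^m}^*$ with $\mathrm{Tr}^m_1(\lambda)=1$, the dual $G_\lambda^*$ of the component $G_\lambda$ satisfies $D_{u_i}D_{u_j}G_\lambda^*=0$ for all $1\le i<j\le\tau$. Then $H(x)=G(x)+F(\mathrm{Tr}^n_1(u_1x),\ldots,\mathrm{Tr}^n_1(u_\tau x))$ is a vectorial bent $(n,m)$-function.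
   Context: $\mathrm{Tr}^m_1(x)=\sum_{i=0}^{m-1}x^{2^i}$. For $\lambda\in\mathbb{F}_{2^m}^*$, $G_\lambda(x)=\mathrm{Tr}^m_1(\lambda G(x))$. For a Boolean function $f$ on $\mathbb{F}_{2^n}$, $W_f(a)=\sum_x(-1)^{f(x)+\mathrm{Tr}^n_1(ax)}$; $f$ is bent if $|W_f(a)|=2^{n/2}$ for all $a$, with dual $f^*$ given by $W_f(a)=2^{n/2}(-1)^{f^*(a)}$. $G$ is vectorial bent if every $G_\lambda$, $\lambda\ne0$, is bent. $D_aD_bf(x)=f(x)+f(x+a)+f(x+b)+f(x+a+b)$. A reduced polynomial is a multilinear polynomial $\sum_{I}a_I\prod_{i\in I}X_i$ over $\mathbb{F}_2$. The value of $F(\cdots)$ lies in $\mathbb{F}_2\subseteq\mathbb{F}_{2^m}$. *)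

(* Defs.v *)
From HB Require Import structures.
From mathcomp Require Import all_boot all_order all_algebra all_field.
Set Implicit Arguments. Unset Strict Implicit. Unset Printing Implicit Defensive.
Import Order.TTheory GRing.Theory Num.Theory.
Local Open Scope ring_scope.

Definition trace (F : fieldType) (d : nat) (x : F) : F := \sum_(i < d) x ^+ (2 ^ i).

(* Its value lies in F_2 = {0,1}; we read it as a boolean. *)
Definition trb (F : fieldType) (d : nat) (x : F) : bool := trace d x != 0.

Definition walsh (L : finFieldType) (n : nat) (f : L -> bool) (a : L) : int :=
  \sum_(x : L) (-1) ^+ (addb (f x) (trb n (a * x))).

Definition bent (L : finFieldType) (n : nat) (f : L -> bool) : Prop :=
  forall a : L, absz (walsh n f a) = (2 ^ (n %/ 2))%N.

(* Dual of a bent function: W_f(a) = 2^(n/2) (-1)^(f^*(a)). *)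
Definition bdual (L : finFieldType) (n : nat) (f : L -> bool) (a : L) : bool :=
  walsh n f a < 0.

Definition component (L K : finFieldType) (m : nat) (G : L -> K) (lam : K) : L -> bool :=
  fun x => trb m (lam * G x).

Definition vbent (L K : finFieldType) (n m : nat) (G : L -> K) : Prop :=
  forall lam : K, lam != 0 -> bent n (component m G lam).

Definition DD (L : finFieldType) (f : L -> bool) (a b x : L) : bool :=
  addb (addb (f x) (f (x + a))) (addb (f (x + b)) (f (x + a + b))).

(* Reduced polynomial sum_I a_I prod_{i in I} X_i over F_2, given by its
   coefficient family a : {set 'I_tau} -> F_2, evaluated at b in F_2^tau. *)
Definition eval_reduced (tau : nat) (a : {ffun {set 'I_tau} -> bool})
  (b : 'I_tau -> bool) : bool :=
  \big[addb/false]_(I : {set 'I_tau}) (a I && [forall i in I, b i]).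

(* Main.v *)
Require Import Defs.
From HB Require Import structures.
From mathcomp Require Import all_boot all_order all_algebra all_field.
From mathcomp Require Import ring.
Import Order.TTheory GRing.Theory Num.Theory.
Local Open Scope ring_scope.
Module Helpers.
Set Implicit Arguments. Unset Strict Implicit. Unset Printing Implicit Defensive.

Section Char2.
Variables (F : finFieldType) (d : nat).
Hypothesis hF : #|F| = (2 ^ d)%N.

Lemma ch2 : 2 \in [pchar F].
Proof. exact: (card_finPcharP hF). Qed.

Lemma two0 : (1 + 1 : F) = 0.
Proof. by have := addrr_pchar2 ch2 1. Qed.

Lemma sqrD2 (x y : F) : (x + y) ^+ 2 = x ^+ 2 + y ^+ 2.
Proof. by rewrite sqrrD (mulrn_pchar ch2) addr0. Qed.

Lemma powD2 (x y : F) i : (x + y) ^+ (2 ^ i) = x ^+ (2 ^ i) + y ^+ (2 ^ i).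
Proof.
elim: i => [|i IH]; first by rewrite !expn0 !expr1.
by rewrite expnSr !exprM IH sqrD2.
Qed.

Lemma trace_add (x y : F) : trace d (x + y) = trace d x + trace d y.
Proof. by rewrite /trace -big_split /=; apply: eq_bigr => i _; rewrite powD2. Qed.

Lemma trace0 : trace d (0 : F) = 0.
Proof. by rewrite /trace big1 // => i _; rewrite expr0n expn_eq0. Qed.

Lemma trace_sq (x : F) : trace d x ^+ 2 = trace d x.
Proof.
have sqsum : forall (k : nat) (f : 'I_k -> F), (\sum_(i < k) f i) ^+ 2 = \sum_(i < k) f i ^+ 2.
  move=> k f; elim/big_rec2: _ => [|i a b _ <-]; first by rewrite expr0n.
  by rewrite sqrD2.
rewrite /trace sqsum.
case: d hF => [|d'] hF'; first by rewrite !big_ord0.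
rewrite big_ord_recr big_ord_recl /=.
have -> : x ^+ (2 ^ d') ^+ 2 = x by rewrite -exprM -expnSr -hF' expf_card.
rewrite addrC expn0 expr1; congr (_ + _); apply: eq_bigr => i _.
by rewrite -exprM -expnSr /bump leq0n add1n.
Qed.

Lemma trace01 (x : F) : trace d x = 0 \/ trace d x = 1.
Proof.
have := trace_sq x; rewrite expr2 => h.
have : trace d x * (trace d x - 1) = 0 by rewrite mulrBr mulr1 h subrr.
by move/eqP; rewrite mulf_eq0 subr_eq0 => /orP [] /eqP; [left|right].
Qed.

Lemma trb_add (x y : F) : trb d (x + y) = trb d x (+) trb d y.
Proof.
rewrite /trb trace_add.
case: (trace01 x) => ->; case: (trace01 y) => ->;
  rewrite ?addr0 ?add0r ?two0 ?eqxx ?oner_eq0 //.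
Qed.

Lemma trb0 : trb d (0 : F) = false.
Proof. by rewrite /trb trace0 eqxx. Qed.

End Char2.

Set Implicit Arguments. Unset Strict Implicit. Unset Printing Implicit Defensive.

Section Affine.
Variables (L : finFieldType) (tau : nat) (u : 'I_tau -> L) (f : L -> bool) (a : L).
Hypothesis hDD : forall i j : 'I_tau, (i < j)%N -> forall x, DD f (u i) (u j) x = false.

Lemma hDD' i j : i != j -> forall x, f (x + u i + u j) = f x (+) f (x + u i) (+) f (x + u j).
Proof.
move=> hij x.
have h : DD f (u i) (u j) x = false.
  have [/hDD //| hji |heq] := ltngtP i j; last by move: hij; rewrite (val_inj heq) eqxx.
  have := hDD hji x; rewrite /DD addrAC => <-; rewrite /DD.
  by case: (f x); case: (f (x + u i)); case: (f (x + u j)); case: (f (x + u i + u j)).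
move: h; rewrite /DD.
by case: (f x); case: (f (x + u i)); case: (f (x + u j)); case: (f (x + u i + u j)).
Qed.

Lemma affine (S : {set 'I_tau}) :
  f (a + \sum_(i in S) u i) = f a (+) \big[addb/false]_(i in S) (f (a + u i) (+) f a).
Proof.
move: {2}#|S| (leqnn #|S|) => N; elim: N S => [|N IH] S hS.
  move: hS; rewrite leqn0 cards_eq0 => /eqP ->; rewrite !big_set0 addr0.
  by case: (f a).
case: (set_0Vmem S) => [->|[i hi]]; first by rewrite !big_set0 addr0; case: (f a).
rewrite (big_setD1 i hi) [X in _ = _ (+) X](big_setD1 i hi) /=.
set S1 := S :\ i.
have hS1 : (#|S1| <= N)%N by move: hS; rewrite (cardsD1 i S) hi add1n ltnS.
case: (set_0Vmem S1) => [->|[j hj]].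
  by rewrite !big_set0 addr0; case: (f a); case: (f (a + u i)).
have hij : j != i by move: hj; rewrite !inE => /andP [].
rewrite (big_setD1 j hj) [X in _ = _ (+) (_ (+) X)](big_setD1 j hj) /=.
set S2 := S1 :\ j.
set D := \big[addb/false]_(k in S2) (f (a + u k) (+) f a).
have e1 : S1 = j |: S2 by rewrite setD1K.
have hS2 : (#|S2| <= N)%N.
  apply: leq_trans hS1; rewrite (cardsD1 j S1) hj add1n; exact: leqnSn.
have IH2 := IH S2 hS2.
have IH1 := IH S1 hS1.
rewrite (big_setD1 j hj) [X in _ = _ (+) X](big_setD1 j hj) /= -/S2 -/D in IH1.
set S3 := S :\ j.
have hj3 : i \in S3 by rewrite !inE eq_sym hij.
have hS3 : (#|S3| <= N)%N.
  move: hS; rewrite (cardsD1 j S).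
  have hjS : j \in S by move: hj; rewrite !inE => /andP [].
  by rewrite hjS add1n ltnS.
have IH3 := IH S3 hS3.
have e3 : S3 :\ i = S2 by apply/setP => k; rewrite !inE; case: (k == i); case: (k == j).
rewrite (big_setD1 i hj3) [X in _ = _ (+) X](big_setD1 i hj3) /= e3 -/D in IH3.
have hij' : i != j by rewrite eq_sym.
have := hDD' hij' (a + \sum_(k in S2) u k).
have -> : a + \sum_(k in S2) u k + u i + u j = a + (u i + (u j + \sum_(k in S2) u k)) by ring.
have -> : a + \sum_(k in S2) u k + u i = a + (u i + \sum_(k in S2) u k) by ring.
have -> : a + \sum_(k in S2) u k + u j = a + (u j + \sum_(k in S2) u k) by ring.
move=> ->; rewrite IH2 IH1 IH3.
rewrite -/D.
by case: (f a); case: (f (a + u i)); case: (f (a + u j)); case: (D).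
Qed.
End Affine.

Set Implicit Arguments. Unset Strict Implicit. Unset Printing Implicit Defensive.

Definition sg (b : bool) : int := (-1) ^+ b.

Lemma sg_add b1 b2 : sg (b1 (+) b2) = sg b1 * sg b2.
Proof. exact: signr_addb. Qed.

Lemma sg_false : sg false = 1. Proof. by []. Qed.

Section Orth.
Variable tau : nat.
Notation BV := {ffun 'I_tau -> bool}.

Lemma orth (b t : BV) :
  \sum_(c : BV) \prod_(i < tau) sg (c i && (b i (+) t i)) = if b == t then 2 ^+ tau else 0.
Proof.
rewrite -(bigA_distr_bigA (fun i j => sg (j && (b i (+) t i)))) /=.
case: eqP => [->|/eqP hne].
  rewrite (eq_bigr (fun _ => 2)) ?prodr_const ?card_ord // => i _.
  by rewrite big_bool /= addbb.
have : [exists i, b i != t i].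
  apply: contraR hne => /existsPn h; apply/eqP/ffunP => i; apply/eqP; exact: negbNE (h i).
case/existsP => i hi; rewrite (bigD1 i) //= big_bool /=.
have -> : b i (+) t i = true by move: hi; case: (b i); case: (t i).
by rewrite mul0r.
Qed.

Lemma expand (Fp : BV -> bool) (t : BV) :
  2 ^+ tau * sg (Fp t) =
  \sum_(b : BV) sg (Fp b) * \sum_(c : BV) \prod_(i < tau) sg (c i && (b i (+) t i)).
Proof.
rewrite (eq_bigr (fun b => sg (Fp b) * (if b == t then 2 ^+ tau else 0))); last first.
  by move=> b _; rewrite orth.
rewrite (bigD1 t) //= eqxx big1; first by rewrite addr0 mulrC.
by move=> b hb; rewrite (negbTE hb) mulr0.
Qed.
End Orth.

Lemma eval_ffun tau (F : {ffun {set 'I_tau} -> bool}) (f : 'I_tau -> bool) :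
  eval_reduced F [ffun i => f i] = eval_reduced F f.
Proof.
rewrite /eval_reduced; apply: eq_bigr => I _; congr (_ && _).
by apply: eq_forallb => i; rewrite ffunE.
Qed.

Lemma walsh_ext (L : finFieldType) n (f f' : L -> bool) :
  (forall x, f x = f' x) -> forall a, walsh n f a = walsh n f' a.
Proof. by move=> h a; rewrite /walsh; apply: eq_bigr => x _; rewrite h. Qed.

Lemma bent_ext (L : finFieldType) n (f f' : L -> bool) :
  (forall x, f x = f' x) -> bent n f -> bent n f'.
Proof. by move=> h hb a; rewrite -(@walsh_ext _ n _ _ h). Qed.

Section Core.
Variables (L : finFieldType) (n tau : nat).
Hypothesis hL : #|L| = (2 ^ n)%N.
Variables (u : 'I_tau -> L) (g : L -> bool) (F : {ffun {set 'I_tau} -> bool}).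
Hypothesis hg : bent n g.
Hypothesis hDD : forall i j : 'I_tau, (i < j)%N ->
  forall x, DD (bdual n g) (u i) (u j) x = false.
Notation BV := {ffun 'I_tau -> bool}.

Let s : int := Posz (2 ^ (n %/ 2))%N.
Let tx (x : L) : BV := [ffun i => trb n (u i * x)].
Let uc (c : BV) : L := \sum_(i | c i) u i.
Let Fp (b : BV) := eval_reduced F b.
Let h x := g x (+) eval_reduced F (fun i => trb n (u i * x)).

Lemma walsh_g y : walsh n g y = sg (bdual n g y) * s.
Proof. by rewrite {1}[walsh n g y]intEsign hg. Qed.

Lemma sg_big (I : finType) (P : pred I) (e : I -> bool) :
  sg (\big[addb/false]_(i | P i) e i) = \prod_(i | P i) sg (e i).
Proof. by apply: (big_morph sg sg_add sg_false). Qed.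

Lemma prodP (c b : BV) x :
  \prod_(i < tau) sg (c i && (b i (+) tx x i)) =
  \prod_(i < tau) sg (c i && b i) * sg (trb n (uc c * x)).
Proof.
rewrite (eq_bigr (fun i => sg (c i && b i) * sg (c i && tx x i))); last first.
  by move=> i _; rewrite -sg_add; case: (c i).
rewrite big_split /=; congr (_ * _).
rewrite -sg_big /uc mulr_suml.
rewrite (big_morph (trb n) (@trb_add _ _ hL) (@trb0 L n)).
by congr sg; rewrite [RHS]big_mkcond; apply: eq_bigr => i _; rewrite ffunE; case: (c i).
Qed.

Let d (a : L) : BV := [ffun i => bdual n g (a + u i) (+) bdual n g a].

Lemma affine_sg a (c : BV) :
  sg (bdual n g (a + uc c)) = sg (bdual n g a) * \prod_(i < tau) sg (c i && d a i).
Proof.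
have -> : uc c = \sum_(i in [set i | c i]) u i by apply: eq_bigl => i; rewrite inE.
rewrite (affine _ hDD) sg_add sg_big; congr (_ * _).
rewrite big_mkcond /=; apply: eq_bigr => i _; rewrite inE ffunE.
by case: (c i).
Qed.

Lemma core_walsh a :
  2 ^+ tau * walsh n h a = 2 ^+ tau * (s * sg (bdual n g a) * sg (Fp (d a))).
Proof.
rewrite /walsh mulr_sumr.
transitivity (\sum_(x : L) \sum_(b : BV) \sum_(c : BV)
   sg (Fp b) * \prod_(i < tau) sg (c i && b i) * sg (g x (+) trb n ((a + uc c) * x))).
  apply: eq_bigr => x _.
  have -> : (-1) ^+ (h x (+) trb n (a * x)) = sg (g x (+) trb n (a * x)) * sg (Fp (tx x)).
    by rewrite /Fp /tx eval_ffun -sg_add /h; congr sg; case: (g x); case: (trb _ _); case: (eval_reduced _ _).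
  rewrite mulrCA expand mulr_sumr; apply: eq_bigr => b _.
  rewrite mulrA mulr_sumr; apply: eq_bigr => c _.
  rewrite prodP mulrDl (@trb_add _ _ hL) !sg_add; ring.
rewrite exchange_big /=.
transitivity (\sum_(b : BV) \sum_(c : BV)
   sg (Fp b) * \prod_(i < tau) sg (c i && b i) * walsh n g (a + uc c)).
  apply: eq_bigr => b _; rewrite exchange_big /=; apply: eq_bigr => c _.
  by rewrite /walsh mulr_sumr.
rewrite [in RHS]mulrCA [in RHS]expand [in RHS]mulr_sumr; apply: eq_bigr => b _.
rewrite [in RHS]mulrA [in RHS]mulr_sumr; apply: eq_bigr => c _.
rewrite walsh_g affine_sg.
have -> : \prod_(i < tau) sg (c i && (b i (+) d a i)) =
          \prod_(i < tau) sg (c i && b i) * \prod_(i < tau) sg (c i && d a i).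
  by rewrite -big_split /=; apply: eq_bigr => i _; rewrite -sg_add; case: (c i).
ring.
Qed.

Lemma core_bent : bent n h.
Proof.
move=> a.
have := core_walsh a.
have h2 : (2 ^+ tau : int) != 0 by rewrite expf_neq0.
move/(mulfI h2) => ->.
by rewrite mulrC abszMsign mulrC abszMsign.
Qed.

End Core.

End Helpers.
Import Helpers.

Theorem corollary3 (n m k tau : nat) (L K : finFieldType)
  (hL : #|L| = (2 ^ n)%N) (hK : #|K| = (2 ^ m)%N)
  (hn : n = k.*2) (hk : (0 < k)%N) (hm : (0 < m)%N) (hmn : (m %| n)%N)
  (u : 'I_tau -> L) (hu : injective u) (htau : (1 <= tau <= k)%N)
  (F : {ffun {set 'I_tau} -> bool}) (G : L -> K)
  (hG : vbent n m G)
  (hD : forall lam : K, lam != 0 -> trb m lam ->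
        forall i j : 'I_tau, (i < j)%N ->
        forall x : L, DD (bdual n (component m G lam)) (u i) (u j) x = false) :
  vbent n m (fun x : L => G x + (eval_reduced F (fun i => trb n (u i * x)) : nat)%:R).
Proof.
move=> lam hlam.
set e := fun x => eval_reduced F (fun i => trb n (u i * x)).
have hcomp : forall x, component m (fun x : L => G x + (e x : nat)%:R) lam x
    = component m G lam x (+) (e x && trb m lam).
  move=> x; rewrite /component mulrDr (@trb_add K m hK).
  by case: (e x) => /=; rewrite ?mulr1 ?mulr0 ?(@trb0 K m) ?addbF.
case hT: (trb m lam).
  apply: (bent_ext _ (core_bent hL F (hG lam hlam) (hD lam hlam hT))) => x.
  by rewrite hcomp hT andbT.
apply: (bent_ext _ (hG lam hlam)) => x.
by rewrite hcomp hT andbF addbF.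
Qed.
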